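(* Let $\mu_1\ge\mu_2$ be positive integers and let $n\ge \mu_1+\mu_2$ be an integer. Put $j=\mu_2+1$ and $k=\mu_1-\mu_2+1$. Then the total number of standard Young tableaux of skew shape $\lambda/(\mu_1,\mu_2)$, summed over all partitions $\lambda$ of $n$ having at most three parts (and containing $(\mu_1,\mu_2)$), filled with the numbers $1,2,\ldots,n-(\mu_1+\mu_2)$, equals \[\sum_i r_{i,j,k}\,M_{i+n-(\mu_1+\mu_2)},\] where $M_m$ is the $m$th Motzkin number and $r_{i,j,k}$ is the coefficient of $x^i$ in the polynomial \[r_{j,k}(x)=r_j(x)r_k(x)-r_{j-1}(x)r_{k-1}(x),\] the polynomials $r_m(x)$ being defined by $r_0(x)=0$ and \[\sum_{m=1}^\infty r_m(x)y^m=\frac{y}{(1-y)\big(1+(1-x)y+y^2\big)}.\]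
   Context: A partition $\lambda=(\lambda_1,\ldots,\lambda_l)$ of $n$ is a weakly decreasing sequence of positive integers summing to $n$; its parts are the $\lambda_i$. For partitions $\mu\subset\lambda$ (i.e. $\mu_i\le\lambda_i$ for all $i$), a standard Young tableau of skew shape $\lambda/\mu$ is a filling of the boxes of the Young diagram of $\lambda$ not in the Young diagram of $\mu$ with the numbers $1,2,\ldots,|\lambda|-|\mu|$, each used once, so that entries increase from left to right along rows and from top to bottom down columns. The Motzkin numbers are $M_m=\sum_{t=0}^{\lfloor m/2\rfloor}\frac{m!}{t!(t+1)!(m-2t)!}$, with generating function $\sum_{m\ge0}M_mx^m=\frac{1-x-\sqrt{1-2x-3x^2}}{2x^2}$. Equivalently, $r_{j,k}(x)$ is the coefficient of $y^jz^k$ in $\frac{yz(1-yz)}{(1-y)(1+(1-x)y+y^2)(1-z)(1+(1-x)z+z^2)}$. *)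

(* Defs.v *)
From mathcomp Require Import all_boot all_order all_algebra.
Set Implicit Arguments. Unset Strict Implicit. Unset Printing Implicit Defensive.
Import Order.TTheory GRing.Theory Num.Theory.

Definition is_partition (lam : seq nat) : bool :=
  sorted geq lam && all (fun x => 0 < x) lam.

Definition contained (mu lam : seq nat) : bool :=
  (size mu <= size lam) && all (fun i => nth 0 mu i <= nth 0 lam i) (iota 0 (size mu)).

(* Box (r, c) (0-indexed row r, column c) lies in the skew diagram lam/mu. *)
Definition in_skew (lam mu : seq nat) (r c : nat) : bool :=
  (nth 0 mu r <= c) && (c < nth 0 lam r).

(* Boxes of lam live in rows < size lam and columns < sumn lam. *)
Definition cellT (lam : seq nat) := ('I_(size lam) * 'I_(sumn lam))%type.

Definition in_skewc (lam mu : seq nat) (x : cellT lam) : bool :=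
  in_skew lam mu x.1 x.2.

(* A filling T of the boxes of lam/mu (value 0 on boxes outside lam/mu) is a
   standard Young tableau of shape lam/mu if it uses each of 1..N exactly once
   (N = |lam| - |mu|) on the boxes of lam/mu, and increases along rows and
   down columns. *)
Definition is_syt (lam mu : seq nat)
    (T : {ffun cellT lam -> 'I_(sumn lam).+1}) : bool :=
  let N := sumn lam - sumn mu in
  [&& [forall x, ~~ in_skewc mu x ==> (val (T x) == 0)],
      [forall x, in_skewc mu x ==> (0 < val (T x) <= N)],
      [forall v : 'I_(sumn lam).+1, (0 < val v <= N) ==>
         (#|[set x | in_skewc mu x && (T x == v)]| == 1)],
      [forall x, forall y, [&& in_skewc mu x, in_skewc mu y,
                              val x.1 == val y.1 & val x.2 < val y.2] ==>
                           (val (T x) < val (T y))] &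
      [forall x, forall y, [&& in_skewc mu x, in_skewc mu y,
                              val x.2 == val y.2 & val x.1 < val y.1] ==>
                           (val (T x) < val (T y))]].

Definition num_syt (lam mu : seq nat) : nat :=
  #|[set T : {ffun cellT lam -> 'I_(sumn lam).+1} | is_syt mu T]|.

Definition lam3 (a b c : nat) : seq nat := [seq x <- [:: a; b; c] | 0 < x].

Definition motzkin (m : nat) : nat :=
  \sum_(t < (m./2).+1) m`! %/ (t`! * (t.+1)`! * (m - 2 * t)`!).

(* sum_{m>=1} r_m y^m = y / ((1-y)(1+(1-x)y+y^2)), r_0 = 0.
   Since (1-y)(1+(1-x)y+y^2) = 1 - x y + x y^2 - y^3, this is equivalent to
   r_0 = 0, r_1 = 1, and r_m = x r_{m-1} - x r_{m-2} + r_{m-3} for m >= 2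
   (with r_{-1} = 0).  rtrip m = (r_m, r_{m-1}, r_{m-2}). *)
Fixpoint rtrip (m : nat) : {poly int} * {poly int} * {poly int} :=
  match m with
  | 0 => (0, 0, 0)
  | 1 => (1, 0, 0)
  | m'.+1 => let: (a, b, c) := rtrip m' in ('X * a - 'X * b + c, a, b)
  end%R.

Definition rpoly (m : nat) : {poly int} := (rtrip m).1.1.

Definition rjk (j k : nat) : {poly int} :=
  (rpoly j * rpoly k - rpoly j.-1 * rpoly k.-1)%R.

(* Main.v *)
Require Import Defs.
From mathcomp Require Import all_boot all_order all_algebra.
From mathcomp Require Import ring lra zify.
Set Implicit Arguments. Unset Strict Implicit. Unset Printing Implicit Defensive.
Import GRing.Theory Num.Theory.
Local Open Scope ring_scope.

Definition Lm (N : nat) (p : {poly int}) : int :=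
  \sum_(i < size p) p`_i * (motzkin (i + N))%:Z.

Lemma Lm_widen N (p : {poly int}) n : (size p <= n)%N ->
  Lm N p = \sum_(i < n) p`_i * (motzkin (i + N))%:Z.
Proof.
move=> hn; rewrite /Lm (big_ord_widen n (fun i => p`_i * (motzkin (i + N))%:Z) hn).
rewrite [RHS](bigID (fun i : 'I_n => (i < size p)%N)) /= [X in _ = _ + X]big1 ?addr0 //.
by move=> i; rewrite -leqNgt => hi; rewrite nth_default // mul0r.
Qed.

Lemma LmD N p q : Lm N (p + q) = Lm N p + Lm N q.
Proof.
set n := maxn (size p) (size q).
rewrite (Lm_widen N (p := p + q) (n := n)); last by rewrite (leq_trans (size_polyD _ _)).
rewrite (Lm_widen N (p := p) (n := n)) ?leq_maxl //.
rewrite (Lm_widen N (p := q) (n := n)) ?leq_maxr //.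
by rewrite -big_split /=; apply: eq_bigr => i _; rewrite coefD mulrDl.
Qed.

Lemma Lm0 N : Lm N 0 = 0.
Proof. by rewrite /Lm size_poly0 big_ord0. Qed.

Lemma LmN N p : Lm N (- p) = - Lm N p.
Proof. by rewrite /Lm size_polyN -sumrN; apply: eq_bigr => i _; rewrite coefN mulNr. Qed.

Lemma LmB N p q : Lm N (p - q) = Lm N p - Lm N q.
Proof. by rewrite LmD LmN. Qed.

Lemma Lm_sum N I (r : seq I) (P : pred I) (F : I -> {poly int}) :
  Lm N (\sum_(i <- r | P i) F i) = \sum_(i <- r | P i) Lm N (F i).
Proof. exact: (big_morph _ (LmD N) (Lm0 N)). Qed.

Lemma LmX N p : Lm N ('X * p) = Lm N.+1 p.
Proof.
rewrite (Lm_widen N (p := 'X * p) (n := (size p).+1)); last first.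
  by rewrite mulrC (leq_trans (size_polyMleq _ _)) // size_polyX addn2.
rewrite big_ord_recl /= coefXM eqxx mul0r add0r /Lm.
by apply: eq_bigr => i _; rewrite coefXM /= addSnnS.
Qed.

Lemma Lm1 N : Lm N 1 = (motzkin N)%:Z.
Proof. by rewrite /Lm size_poly1 big_ord1 coefC /= mul1r. Qed.

Fixpoint Bp (s h : nat) : int :=
  match s with
  | 0 => (h == 0%N)%:R
  | s'.+1 => Bp s' h.+1 + (if h is h'.+1 then Bp s' h' else 0)
  end.

Definition bal (u h : nat) : int :=
  ('C(u.*2 + h, u))%:Z - (if u is u'.+1 then 'C(u.*2 + h, u') else 0%N)%:Z.

Lemma Bp_small s h : (s < h)%N -> Bp s h = 0.
Proof.
elim: s h => [|s IH] [|h] //= hs.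
rewrite !IH ?addr0 //; lia.
Qed.

Lemma Bp_odd s h : odd (s + h) -> Bp s h = 0.
Proof.
elim: s h => [|s IH] [|h] //= hs.
- by rewrite IH ?addr0 // addn1 /=; rewrite addn0 in hs.
- rewrite !IH ?addr0 //; move: hs; rewrite !addnS /= ?negbK //.
Qed.

Lemma bal_rec1 u h : bal u.+1 h.+1 = bal u h.+2 + bal u.+1 h.
Proof.
rewrite /bal.
have e1 : (u.+1.*2 + h.+1 = (u.*2 + h.+2).+1)%N by rewrite doubleS; lia.
have e2 : (u.+1.*2 + h = u.*2 + h.+2)%N by rewrite doubleS; lia.
rewrite e1 e2 {e1 e2}; set n := (u.*2 + h.+2)%N.
case: u @n => [|u] n.
  rewrite binS !bin0 !PoszD; lia.
rewrite binS [X in _ - X%:Z]binS !PoszD; lia.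
Qed.

Lemma bal_rec0 u : bal u.+1 0 = bal u 1.
Proof.
rewrite /bal !addn0 doubleS addn1.
case: u => [|u]; first by rewrite /= !bin0.
rewrite binS [X in _ - X%:Z]binS.
have hs : 'C((u.+1).*2.+1, u.+2) = 'C((u.+1).*2.+1, u.+1).
  rewrite -{1}(bin_sub (n := (u.+1).*2.+1) (m := u.+1)); last by rewrite -addnn; lia.
  by congr 'C(_, _); rewrite -addnn; lia.
rewrite hs !PoszD; lia.
Qed.

Lemma Bp_bal s u h : (u.*2 + h)%N = s -> Bp s h = bal u h.
Proof.
elim: s u h => [|s IH] u h.
  by case: u => [|u] //; case: h => //= _; rewrite /bal /= bin0.
case: u => [|u] /= hs.
  rewrite Bp_small; last by rewrite -hs.
  case: h hs => [//|h] hs; rewrite add0r (IH 0%N h) //.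
    by rewrite /bal /= !bin0.
  by move: hs; rewrite /= add0n => -[].
rewrite (IH u h.+1); last by move: hs; rewrite doubleS !addSn addnS => -[].
case: h hs => [|h] hs.
  by rewrite addr0 bal_rec0.
rewrite (IH u.+1 h); last by move: hs; rewrite addnS => -[].
by rewrite bal_rec1.
Qed.

Arguments Bp : simpl never.
Definition Tm (m h : nat) : int := \sum_(s < m.+1) ('C(m, s))%:Z * Bp s h.

Lemma sum_widen_int n n' (F : nat -> int) : (n <= n')%N ->
  (forall i, (n <= i)%N -> (i < n')%N -> F i = 0) ->
  \sum_(i < n) F i = \sum_(i < n') F i.
Proof.
move=> hn hF; rewrite (big_ord_widen n' F hn).
rewrite [RHS](bigID (fun i : 'I_n' => (i < n)%N)) /= [X in _ = _ + X]big1 ?addr0 //.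
by move=> i; rewrite -leqNgt => hi; rewrite hF.
Qed.

Lemma Tm0 h : Tm 0 h = (h == 0%N)%:R.
Proof. by rewrite /Tm big_ord1 bin0 mul1r. Qed.

Lemma Bp_S s h : Bp s.+1 h = Bp s h.+1 + (if h is h'.+1 then Bp s h' else 0).
Proof. by []. Qed.

Lemma Tm_rec m h :
  Tm m.+1 h = Tm m h.+1 + Tm m h + (if h is h'.+1 then Tm m h' else 0).
Proof.
have E1 : Tm m.+1 h = \sum_(s < m.+2) ('C(m, s))%:Z * Bp s h +
                      \sum_(s < m.+1) ('C(m, s))%:Z * Bp s.+1 h.
  rewrite /Tm big_ord_recl [X in _ = X + _]big_ord_recl !bin0 -addrA; congr (_ + _).
  rewrite -big_split /=; apply: eq_bigr => i _.
  by rewrite binS PoszD mulrDl.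
have E2 : \sum_(s < m.+2) ('C(m, s))%:Z * Bp s h = Tm m h.
  rewrite /Tm [RHS](sum_widen_int (F := fun s => ('C(m, s))%:Z * Bp s h) (n' := m.+2)) //.
  by move=> i hi hi2; rewrite bin_small ?mul0r.
have E3 : \sum_(s < m.+1) ('C(m, s))%:Z * Bp s.+1 h = Tm m h.+1 +
   (if h is h'.+1 then Tm m h' else 0).
  rewrite /Tm; case: h {E1 E2} => [|h].
    by rewrite addr0; apply: eq_bigr => i _; rewrite Bp_S addr0.
  by rewrite -big_split /=; apply: eq_bigr => i _; rewrite Bp_S mulrDr.
rewrite E1 E2 E3; case: h {E1 E2 E3} => [|h]; lra.
Qed.

Lemma sum_pairs (K : nat) (f : nat -> int) :
  \sum_(s < K.*2) f s = \sum_(t < K) (f t.*2 + f t.*2.+1).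
Proof.
elim: K => [|K IH]; first by rewrite !big_ord0.
by rewrite doubleS !big_ord_recr /= IH addrA.
Qed.

Lemma motz_term m t : (t.*2 <= m)%N ->
  ((m`! %/ (t`! * (t.+1)`! * (m - 2 * t)`!))%N)%:Z = ('C(m, t.*2))%:Z * bal t 0.
Proof.
move=> htm.
set c := 'C(t.*2, t).
set d := (if t is t'.+1 then 'C(t.*2, t') else 0%N).
have H1 : (c * (t`! * t`!) = (t.*2)`!)%N.
  rewrite /c -(bin_fact (n := t.*2) (m := t)); last by rewrite -addnn leq_addr.
  by rewrite -addnn addnK.
have H2 : (d * (t`! * (t.+1)`!) = (t.*2)`! * t)%N.
  rewrite /d; case: t @c @d htm H1 => [|t] c d htm H1; first by rewrite muln0 mul0n.
  rewrite -(bin_fact (n := t.+1.*2) (m := t)); last by rewrite doubleS -addnn; lia.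
  have -> : (t.+1.*2 - t = t.+2)%N by rewrite doubleS -addnn; lia.
  rewrite factS; lia.
have H3 : ((c - d) * (t`! * (t.+1)`!) = (t.*2)`!)%N.
  rewrite mulnBl H2 [X in (X - _)%N](_ : _ = (t.*2)`! * t.+1)%N; last first.
    by rewrite factS -H1; ring.
  by rewrite mulnS addnK.
have Hdc : (d <= c)%N.
  have : (d * (t`! * (t.+1)`!) <= c * (t`! * (t.+1)`!))%N.
    rewrite H2 [X in (_ <= X)%N](_ : _ = (t.*2)`! * t.+1)%N; last first.
      by rewrite factS -H1; ring.
    by rewrite leq_mul2l ltnW ?orbT.
  by rewrite leq_pmul2r // muln_gt0 !fact_gt0.
have H4 : ('C(m, t.*2) * (c - d) * (t`! * (t.+1)`! * (m - 2 * t)`!) = m`!)%N.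
  rewrite -(bin_fact htm) mul2n -mulnA; congr (_ * _)%N.
  by rewrite mulnA H3.
rewrite -H4 mulnK; last by rewrite !muln_gt0 !fact_gt0.
rewrite /bal addn0 PoszM; congr (_ * _).
by rewrite -/c -/d subzn.
Qed.

Lemma Tm_motzkin m : Tm m 0 = (motzkin m)%:Z.
Proof.
rewrite /Tm /motzkin (big_morph Posz PoszD (erefl (Posz 0))).
rewrite (sum_widen_int (F := fun s => ('C(m, s))%:Z * Bp s 0) (n' := (m./2.+1).*2)); first last.
- by move=> i hi hi2; rewrite bin_small ?mul0r.
- by rewrite doubleS -[m in (m < _)%N]odd_double_half; case: (odd m); lia.
rewrite (sum_pairs _ (fun s => ('C(m, s))%:Z * Bp s 0)); apply: eq_bigr => t _.
rewrite (Bp_odd (s := t.*2.+1)) ?mulr0 ?addr0; last by rewrite addn0 /= odd_double.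
rewrite (Bp_bal (u := t)) ?addn0 //.
rewrite motz_term //.
have := ltn_ord t; rewrite ltnS => ht.
by rewrite -[m in (_ <= m)%N]odd_double_half -leq_double in ht; case: (odd m) ht; lia.
Qed.

Fixpoint Ppair (h : nat) : {poly int} * {poly int} :=
  match h with
  | 0 => (1, 0)
  | h'.+1 => let: (a, b) := Ppair h' in (('X - 1) * a - b, a)
  end.
Definition P h := (Ppair h).1.
Definition Pm h := (Ppair h).2.

Lemma P0 : P 0 = 1. Proof. by []. Qed.
Lemma Pm0 : Pm 0 = 0. Proof. by []. Qed.
Lemma P_S h : P h.+1 = ('X - 1) * P h - Pm h.
Proof. by rewrite /P /Pm /=; case: (Ppair h). Qed.
Lemma Pm_S h : Pm h.+1 = P h.
Proof. by rewrite /P /Pm /=; case: (Ppair h). Qed.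

Lemma XP h : 'X * P h = P h.+1 + P h + Pm h.
Proof. rewrite P_S mulrBl mul1r; ring. Qed.

Lemma Lm_P h m : Lm m (P h) = Tm m h /\
   Lm m (Pm h) = (if h is h'.+1 then Tm m h' else 0).
Proof.
elim: h m => [|h IH] m.
  by rewrite P0 Pm0 Lm1 Lm0 Tm_motzkin.
rewrite Pm_S (proj1 (IH m)); split => //.
rewrite P_S mulrBl mul1r !LmB LmX (proj1 (IH m.+1)) (proj1 (IH m)) (proj2 (IH m)).
rewrite Tm_rec; case: h {IH} => [|h]; lra.
Qed.

Lemma orth a : forall b, Lm 0 (P a * P b) = (a == b)%:R /\
                         Lm 0 (Pm a * P b) = (a == b.+1)%:R.
Proof.
elim: a => [|a IH] b.
  rewrite P0 Pm0 mul1r mul0r Lm0 (proj1 (Lm_P b 0)) Tm0 eq_sym; split => //.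
have e : P a.+1 * P b = P a * P b.+1 + P a * Pm b - Pm a * P b.
  rewrite P_S (_ : P b.+1 = 'X * P b - P b - Pm b); last by rewrite XP; ring.
  ring.
rewrite Pm_S (proj1 (IH b)) e !LmD LmN (proj1 (IH b.+1)) (proj2 (IH b)); split => //.
clear e; case: b => [|b]; first by rewrite Pm0 mulr0 Lm0; rewrite addr0 subrr.
by rewrite Pm_S (proj1 (IH b)) eqSS; rewrite addrC addrA addNr add0r.
Qed.

Definition Rs m := \sum_(h < m) P h.

Lemma rtrip_S m : rtrip m.+2 = let: (a, b, c) := rtrip m.+1 in ('X * a - 'X * b + c, a, b).
Proof. by []. Qed.

Lemma rtrip_eq m : rtrip m.+2 = (rpoly m.+2, rpoly m.+1, rpoly m).
Proof.
elim: m => [|m IH]; first by [].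
rewrite [in LHS]rtrip_S IH; congr (_, _, _).
by rewrite /rpoly [rtrip m.+3]rtrip_S IH.
Qed.

Lemma rpoly_S m : rpoly m.+3 = 'X * rpoly m.+2 - 'X * rpoly m.+1 + rpoly m.
Proof. by rewrite /rpoly rtrip_S rtrip_eq. Qed.

Lemma rpoly0 : rpoly 0 = 0. Proof. by []. Qed.
Lemma rpoly1 : rpoly 1 = 1. Proof. by []. Qed.
Lemma rpoly2 : rpoly 2 = 'X.
Proof. by rewrite /rpoly /= mulr1 mulr0 subr0 addr0. Qed.

Lemma rpoly_Rs m : rpoly m = Rs m.
Proof.
suff : rpoly m = Rs m /\ rpoly m.+1 = Rs m.+1 /\ rpoly m.+2 = Rs m.+2 by case.
elim: m => [|m [IH1 [IH2 IH3]]].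
  rewrite rpoly0 rpoly1 rpoly2 /Rs big_ord0 big_ord1 big_ord_recr big_ord1 /= P0.
  by rewrite P_S P0 Pm0 mulr1 subr0; split => //; split => //; rewrite addrC subrK.
split => //; split => //.
rewrite rpoly_S IH1 IH2 IH3 /Rs.
rewrite !big_ord_recr /=.
set S := \sum_(i < m) P i.
rewrite -mulrBr (_ : S + P m + P m.+1 - (S + P m) = P m.+1); last by ring.
rewrite XP Pm_S; ring.
Qed.

Lemma sum_ind_eq (a k : nat) : \sum_(b < k) ((a == b)%:R : int) = (a < k)%:R.
Proof.
elim: k => [|k IH]; first by rewrite big_ord0 ltn0.
rewrite big_ord_recr /= IH -natrD; congr (_%:R).
by case: (ltngtP a k) => h //=; rewrite ltnS; lia.
Qed.

Lemma sum_lt_min (j k : nat) : \sum_(a < j) ((a < k)%:R : int) = (minn j k)%:R.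
Proof.
elim: j => [|j IH]; first by rewrite big_ord0 min0n.
rewrite big_ord_recr /= IH; case: (ltnP j k) => h.
  rewrite !minnE; rewrite -natrD; congr (_%:R); lia.
by rewrite addr0 !minnE; congr (_%:R); lia.
Qed.

Lemma Lm0_RR j k : Lm 0 (Rs j * Rs k) = (minn j k)%:R.
Proof.
rewrite /Rs mulr_suml Lm_sum -sum_lt_min; apply: eq_bigr => a _.
rewrite mulr_sumr Lm_sum -sum_ind_eq; apply: eq_bigr => b _.
by rewrite (proj1 (orth a b)).
Qed.

Lemma Lm0_rjk j k : (0 < j)%N -> (0 < k)%N -> Lm 0 (rjk j k) = 1.
Proof.
case: j => // j; case: k => // k _ _.
rewrite /rjk /= !rpoly_Rs LmB !Lm0_RR.
rewrite -natrB; last by rewrite !minnE; lia.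
by rewrite (_ : (minn j.+1 k.+1 - minn j k = 1)%N) //; rewrite !minnE; lia.
Qed.

Lemma rpoly_rec m : (0 < m)%N ->
  rpoly m.+1 = 'X * rpoly m - 'X * rpoly m.-1 + rpoly m.-2.
Proof.
case: m => // -[|m] _.
  by rewrite rpoly2 rpoly1 rpoly0 mulr1 mulr0 subr0 addr0.
by rewrite rpoly_S.
Qed.

Lemma rjk_rec j k : (0 < j)%N -> (0 < k)%N ->
  'X * rjk j k = rjk j k.+1 + rjk j.+1 k.-1 + rjk j.-1 k.
Proof.
move=> hj hk; rewrite /rjk /=.
rewrite (rpoly_rec hk) (rpoly_rec hj).
case: j hj => // j _; case: k hk => // k _ /=; ring.
Qed.

Local Close Scope ring_scope.

Notation FT lam := {ffun cellT lam -> 'I_(sumn lam).+1}.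

Lemma is_sytP (lam mu : seq nat) (T : FT lam) :
  reflect [/\ forall x, ~~ in_skewc mu x -> val (T x) = 0,
              forall x, in_skewc mu x -> 0 < val (T x) <= sumn lam - sumn mu,
              forall v : 'I_(sumn lam).+1, 0 < val v <= sumn lam - sumn mu ->
                 #|[set x | in_skewc mu x && (T x == v)]| = 1,
              forall x y, in_skewc mu x -> in_skewc mu y -> val x.1 = val y.1 ->
                 val x.2 < val y.2 -> val (T x) < val (T y) &
              forall x y, in_skewc mu x -> in_skewc mu y -> val x.2 = val y.2 ->
                 val x.1 < val y.1 -> val (T x) < val (T y)]
   (is_syt mu T).
Proof.
rewrite /is_syt; apply: (iffP and5P).
  move=> [/forallP h1 /forallP h2 /forallP h3 /forallP h4 /forallP h5]; split.
  - by move=> x hx; apply/eqP; apply: (implyP (h1 x) hx).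
  - by move=> x hx; apply: (implyP (h2 x) hx).
  - by move=> v hv; apply/eqP; apply: (implyP (h3 v) hv).
  - move=> x y hx hy e l; apply: (implyP (forallP (h4 x) y)).
    by rewrite hx hy e eqxx l.
  - move=> x y hx hy e l; apply: (implyP (forallP (h5 x) y)).
    by rewrite hx hy e eqxx l.
move=> [h1 h2 h3 h4 h5]; split.
- by apply/forallP => x; apply/implyP => hx; apply/eqP; apply: h1.
- by apply/forallP => x; apply/implyP => hx; apply: h2.
- by apply/forallP => v; apply/implyP => hv; apply/eqP; apply: h3.
- apply/forallP => x; apply/forallP => y; apply/implyP => /and4P [hx hy /eqP e l].
  exact: h4.
- apply/forallP => x; apply/forallP => y; apply/implyP => /and4P [hx hy /eqP e l].
  exact: h5.
Qed.

Lemma bij_card (A B : finType) (P : pred A) (Q : pred B) (f : A -> B) (g : B -> A) :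
  (forall a, P a -> Q (f a)) -> (forall b, Q b -> P (g b)) ->
  (forall a, P a -> g (f a) = a) -> (forall b, Q b -> f (g b) = b) ->
  #|[set a | P a]| = #|[set b | Q b]|.
Proof.
move=> hf hg hgf hfg.
have H (A' B' : finType) (P' : pred A') (Q' : pred B') (f' : A' -> B') (g' : B' -> A') :
    (forall a, P' a -> Q' (f' a)) -> (forall a, P' a -> g' (f' a) = a) ->
    #|[set a | P' a]| <= #|[set b | Q' b]|.
  move=> hf' hgf'.
  rewrite -(card_in_imset (f := f')); last first.
    by move=> x y; rewrite !inE => hx hy e; rewrite -(hgf' x hx) -(hgf' y hy) e.
  apply: subset_leq_card; apply/subsetP => y /imsetP [x]; rewrite !inE => hx ->.
  exact: hf'.
by apply/eqP; rewrite eqn_leq (H _ _ _ _ f g) // (H _ _ _ _ g f).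
Qed.

Lemma card_split_fun (A : finType) (P : pred A) (f : A -> nat) K :
  (forall a, P a -> f a < K) ->
  #|[set a | P a]| = \sum_(r < K) #|[set a | P a && (f a == r)]|.
Proof.
elim: K P => [|K IH] P hP.
  rewrite big_ord0; apply/eqP; rewrite cards_eq0; apply/eqP/setP => a.
  by rewrite !inE; apply/negbTE/negP => /hP.
rewrite big_ord_recr /=.
rewrite -(cardsID [set a | f a == K] [set a | P a]).
have -> : [set a | P a] :&: [set a | f a == K] = [set a | P a && (f a == K)].
  by apply/setP => a; rewrite !inE.
have -> : [set a | P a] :\: [set a | f a == K] = [set a | P a && (f a != K)].
  by apply/setP => a; rewrite !inE andbC.
rewrite addnC; congr (_ + _).
rewrite (IH (fun a => P a && (f a != K))); last first.
  by move=> a /andP [/hP]; rewrite ltnS leq_eqVlt => /orP [->|].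
apply: eq_bigr => r _; apply: eq_card => a; rewrite !inE.
case: (f a =P r) => [->|_]; rewrite ?andbF // !andbT.
by have := ltn_ord r; rewrite neq_ltn => ->; rewrite andbT.
Qed.

Lemma cell_eq (lam : seq nat) (x y : cellT lam) :
  val x.1 = val y.1 -> val x.2 = val y.2 -> x = y.
Proof.
case: x y => [x1 x2] [y1 y2] /= h1 h2.
by congr (_, _); apply: val_inj.
Qed.

Lemma syt_inj (lam mu : seq nat) (T : FT lam) x y :
  is_syt mu T -> in_skewc mu x -> in_skewc mu y -> T x = T y -> x = y.
Proof.
move=> /is_sytP [h1 h2 h3 _ _] hx hy e.
have /eqP /cards1P [z hz] := h3 (T x) (h2 x hx).
have : x \in [set z] by rewrite -hz inE hx eqxx.
have : y \in [set z] by rewrite -hz inE hy e eqxx.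
by rewrite !inE => /eqP -> /eqP ->.
Qed.

Definition row1 (lam mu : seq nat) (T : FT lam) : nat :=
  if [pick x | in_skewc mu x && (val (T x) == 1)] is Some x then val x.1 else 0.

Lemma row1P (lam mu : seq nat) (T : FT lam) :
  is_syt mu T -> sumn mu < sumn lam ->
  exists x, [/\ in_skewc mu x, val (T x) = 1 & val x.1 = row1 mu T].
Proof.
move=> hT hN; rewrite /row1; case: pickP => [x /andP [hx /eqP h1] | hn].
  by exists x.
exfalso; move: hT => /is_sytP [h1 h2 h3 _ _].
have hS : 1 < (sumn lam).+1 by rewrite ltnS (leq_ltn_trans _ hN).
have hv : 0 < val (inord 1 : 'I_(sumn lam).+1) <= sumn lam - sumn mu.
  by rewrite /= inordK // subn_gt0 hN.
have /eqP /cards1P [z hz] := h3 _ hv.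
have : z \in [set z] by rewrite inE.
rewrite -hz inE => /andP [hzs /eqP hze].
by have := hn z; rewrite /= hzs hze inordK.
Qed.

Lemma syt_ext_imp (lam mu mu' : seq nat) (T : FT lam) :
  (forall x : cellT lam, in_skewc mu x = in_skewc mu' x) -> sumn mu = sumn mu' ->
  is_syt mu T -> is_syt mu' T.
Proof.
move=> hs hsum /is_sytP [h1 h2 h3 h4 h5]; apply/is_sytP; split.
- by move=> x; rewrite -hs; apply: h1.
- by move=> x; rewrite -hs -hsum; apply: h2.
- move=> v; rewrite -hsum => hv; rewrite -(h3 v hv).
  by apply: eq_card => x; rewrite !inE hs.
- by move=> x y; rewrite -!hs; apply: h4.
- by move=> x y; rewrite -!hs; apply: h5.
Qed.

Lemma num_syt_ext (lam mu mu' : seq nat) :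
  (forall i, nth 0 mu i = nth 0 mu' i) -> sumn mu = sumn mu' ->
  num_syt lam mu = num_syt lam mu'.
Proof.
move=> hn hsum.
have hs : forall x : cellT lam, in_skewc mu x = in_skewc mu' x.
  by move=> x; rewrite /in_skewc /in_skew hn.
apply: eq_card => T; rewrite !inE; apply/idP/idP; apply: syt_ext_imp => //.

Qed.

Lemma num_syt_base (lam mu : seq nat) :
  (forall i, nth 0 mu i = nth 0 lam i) -> sumn mu = sumn lam ->
  num_syt lam mu = 1.
Proof.
move=> hn hsum.
have hs : forall x : cellT lam, in_skewc mu x = false.
  by move=> x; rewrite /in_skewc /in_skew hn; apply/negbTE/andP => -[a b]; move: (leq_ltn_trans a b); rewrite ltnn.
apply/eqP/cards1P; exists [ffun => ord0]; apply/setP => T; rewrite !inE.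
apply/is_sytP/eqP.
  move=> [h1 _ _ _ _]; apply/ffunP => x; rewrite ffunE; apply: val_inj.
  by rewrite /= h1 // hs.
move=> ->; split.
- by move=> x; rewrite ffunE.
- by move=> x; rewrite hs.
- by move=> v; rewrite hsum subnn => /andP [a b]; move: a; rewrite lt0n; move: b; rewrite leqn0 => ->.
- by move=> x y; rewrite hs.
- by move=> x y; rewrite hs.
Qed.

Lemma val_ordE n (i : 'I_n) : val i = nat_of_ord i. Proof. by []. Qed.
Ltac glia := rewrite ?val_ordE /=; lia.

Lemma nth_le_sumn (s : seq nat) i : nth 0 s i <= sumn s.
Proof.
elim: s i => [|a s IH] [|i] //=; first by rewrite leq_addr.
by rewrite (leq_trans (IH i)) // leq_addl.
Qed.

Definition phi (lam : seq nat) (T : FT lam) : FT lam :=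
  [ffun x => inord (val (T x)).-1].

Definition psi (lam mu mu' : seq nat) (r : nat) (T : FT lam) : FT lam :=
  [ffun x => if (val x.1 == r) && (val x.2 == nth 0 mu r) then inord 1
             else if in_skewc mu' x then inord (val (T x)).+1 else ord0].

Lemma card_row (lam mu mu' : seq nat) (r : nat) :
  (forall i, nth 0 lam i.+1 <= nth 0 lam i) ->
  (forall i, nth 0 mu i.+1 <= nth 0 mu i) ->
  (forall i, nth 0 mu' i = nth 0 mu i + (i == r)) ->
  sumn mu' = (sumn mu).+1 ->
  sumn mu < sumn lam ->
  #|[set T : FT lam | is_syt mu T && (row1 mu T == r)]| =
   (if (nth 0 mu r < nth 0 lam r) && ((r == 0) || (nth 0 mu r < nth 0 mu r.-1))
    then num_syt lam mu' else 0).
Proof.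
move=> hl hm hm' hsum hN.
set S := sumn lam.
have hrel : forall x : cellT lam, in_skewc mu x = in_skewc mu' x ||
     [&& val x.1 == r, val x.2 == nth 0 mu r & val x.2 < nth 0 lam r].
  move=> x; rewrite /in_skewc /in_skew hm' /=.
  case: (nat_of_ord x.1 =P r) => [->|_]; last by rewrite addn0 orbF.
  by rewrite /= addn1 leq_eqVlt (eq_sym (nat_of_ord x.2)) andb_orl orbC.
have hnot0 : forall x : cellT lam, in_skewc mu' x ->
    ~~ ((val x.1 == r) && (val x.2 == nth 0 mu r)).
  move=> x; rewrite /in_skewc /in_skew hm' => /andP [a _].
  apply/negP => /andP [/eqP e1 /eqP e2]; move: a; rewrite /= e1 e2 eqxx addn1 ltnn.
  by [].
have hskew' : forall x : cellT lam, in_skewc mu' x -> in_skewc mu x.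
  by move=> x h; rewrite hrel h.
have hmono : forall i j, i <= j -> nth 0 mu j <= nth 0 mu i.
  move=> i j; elim: j => [|j IH]; first by rewrite leqn0 => /eqP ->.
  rewrite leq_eqVlt => /orP [/eqP -> //|]; rewrite ltnS => /IH h.
  exact: leq_trans (hm j) h.
have fwd : forall T : FT lam, is_syt mu T -> row1 mu T = r ->
   [/\ (nth 0 mu r < nth 0 lam r) && ((r == 0) || (nth 0 mu r < nth 0 mu r.-1)),
       (forall x, in_skewc mu x -> val (T x) = 1 ->
           (val x.1 == r) && (val x.2 == nth 0 mu r)) &
       (forall x, (val x.1 == r) && (val x.2 == nth 0 mu r) -> val (T x) = 1)].
  move=> T hT hr.
  have [x0 [hx0 hT0 hx01]] := row1P hT hN; rewrite hr in hx01.
  move: (hT) => /is_sytP [h1 h2 h3 h4 h5].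
  have hx02 : val x0.2 = nth 0 mu r.
    move: (hx0); rewrite /in_skewc /in_skew hx01 => /andP [ha hb].
    case: (ltngtP (nth 0 mu r) (val x0.2)) => // hlt; last by move: ha; rewrite leqNgt hlt.
    exfalso.
    have hc : nth 0 mu r < S := ltn_trans hlt (ltn_ord x0.2).
    pose y : cellT lam := (x0.1, Ordinal hc).
    have hy : in_skewc mu y by rewrite /in_skewc /in_skew /= hx01 leqnn (ltn_trans hlt hb).
    have := h4 y x0 hy hx0 erefl hlt; rewrite hT0 ltnS leqn0 => /eqP hy0.
    by have := h2 y hy; rewrite /= hy0.
  have uniq1 : forall x, in_skewc mu x -> val (T x) = 1 -> x = x0.
    by move=> x hx h; apply: (syt_inj hT hx hx0); apply: val_inj; rewrite h hT0.
  split.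
  - move: (hx0); rewrite /in_skewc /in_skew hx01 hx02 => /andP [_ hlt]; rewrite hlt /=.
    case: (posnP r) => [->//|hr0]; apply/orP; right.
    rewrite ltnNge; apply/negP => hle.
    have hr1 : r.-1 < size lam by rewrite (leq_ltn_trans (leq_pred r)) // -hx01 ltn_ord.
    pose y : cellT lam := (Ordinal hr1, x0.2).
    have hy : in_skewc mu y.
      rewrite /in_skewc /in_skew /= hx02 hle /=.
      by apply: (leq_trans hlt); have := hl r.-1; rewrite prednK.
    have := h5 y x0 hy hx0 erefl; rewrite /= hx01 ltn_predL hr0 hT0 => /(_ isT).
    rewrite ltnS leqn0 => /eqP hy0.
    by have := h2 y hy; rewrite /= hy0.
  - by move=> x hx h; have -> := uniq1 x hx h; rewrite hx01 hx02 !eqxx.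
  - move=> x /andP [/eqP e1 /eqP e2].
    by have -> : x = x0 by apply: cell_eq; rewrite ?e1 ?e2 ?hx01 ?hx02.
case: ifP => hvalid; last first.
  apply/eqP; rewrite cards_eq0; apply/eqP/setP => T; rewrite !inE.
  apply/negbTE/negP => /andP [hT /eqP hr]; have [hv _ _] := fwd T hT hr.
  by rewrite hv in hvalid.
move/andP: (hvalid) => [hlt hr0].
have hrs : r < size lam.
  by rewrite ltnNge; apply/negP => h; move: hlt; rewrite (nth_default 0 h) ltn0.
have hcs : nth 0 mu r < S by apply: leq_trans hlt (nth_le_sumn _ _).
pose x0 : cellT lam := (Ordinal hrs, Ordinal hcs).
have hx0 : in_skewc mu x0 by rewrite /in_skewc /in_skew /= leqnn hlt.
have isx0 : forall x : cellT lam,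
    ((val x.1 == r) && (val x.2 == nth 0 mu r)) = (x == x0).
  move=> x; apply/andP/eqP => [[/eqP a /eqP b]|->]; last by rewrite /= !eqxx.
  by apply: cell_eq.
have hrel2 : forall x : cellT lam, in_skewc mu x = in_skewc mu' x || (x == x0).
  move=> x; rewrite hrel -isx0 andbA.
  case: (boolP ((val x.1 == r) && (val x.2 == nth 0 mu r))) => //= /andP [_ /eqP ->].
  by rewrite hlt orbT.
have hx0' : in_skewc mu' x0 = false.
  by apply/negbTE/negP => /hnot0; rewrite /= !eqxx.
have hS1 : 0 < S by apply: leq_ltn_trans hN.
have vphi : forall (T : FT lam) x, val (phi T x) = (val (T x)).-1.
  move=> T x; rewrite ffunE /= inordK //.
  by rewrite ltnS (leq_trans (leq_pred _)) // -ltnS.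
have vpsi : forall T' : FT lam, is_syt mu' T' -> forall x,
   val (psi mu mu' r T' x) =
   (if x == x0 then 1 else if in_skewc mu' x then (val (T' x)).+1 else 0).
  move=> T' /is_sytP [_ g2 _ _ _] x; rewrite ffunE isx0.
  case: (x == x0); first by rewrite /= inordK.
  case: (boolP (in_skewc mu' x)) => // hx.
  rewrite /= inordK //; have := g2 x hx; rewrite /= hsum; lia.
have ha : forall T : FT lam, is_syt mu T && (row1 mu T == r) -> is_syt mu' (phi T).
  move=> T /andP [hT /eqP hr]; have [_ fw1 fw2] := fwd T hT hr.
  move: (hT) => /is_sytP [h1 h2 h3 h4 h5].
  have hTx0 : val (T x0) = 1 by apply: fw2; rewrite /= !eqxx.
  apply/is_sytP; split.
  - move=> x hx; rewrite vphi.
    case: (boolP (x == x0)) => [/eqP -> | hne]; first by rewrite hTx0.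
    by rewrite h1 // hrel2 negb_or hx.
  - move=> x hx; rewrite vphi.
    have h1' : val (T x) != 1.
      by apply/eqP => /(fw1 x (hskew' x hx)); apply/negP; apply: hnot0.
    have := h2 x (hskew' x hx); rewrite hsum; move: h1'; glia.
  - move=> v hv.
    have hv1 : (nat_of_ord v).+1 < S.+1 by move: hv; rewrite /= hsum; glia.
    have hv' : 0 < val (inord (val v).+1 : 'I_S.+1) <= S - sumn mu.
      by rewrite /= inordK //; move: hv; rewrite hsum; glia.
    rewrite -(h3 _ hv'); apply: eq_card => x; rewrite !inE.
    apply/andP/andP => [[hs /eqP he] | [hs /eqP he]].
      split; first exact: hskew'.
      apply/eqP/val_inj; rewrite /= inordK // -he vphi.
      by have := h2 x (hskew' x hs); glia.
    have hTx : val (T x) = (val v).+1 by rewrite he /= inordK.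
    have hne : x != x0.
      by apply/negP => /eqP e; move: hTx; rewrite e hTx0; move: hv; glia.
    split; first by move: hs; rewrite hrel2 (negbTE hne) orbF.
    by apply/eqP/val_inj; rewrite vphi hTx.
  - move=> x y hx hy e l; rewrite !vphi.
    have := h4 x y (hskew' x hx) (hskew' y hy) e l.
    have := h2 x (hskew' x hx); glia.
  - move=> x y hx hy e l; rewrite !vphi.
    have := h5 x y (hskew' x hx) (hskew' y hy) e l.
    have := h2 x (hskew' x hx); glia.
have hb : forall T' : FT lam, is_syt mu' T' ->
    is_syt mu (psi mu mu' r T') && (row1 mu (psi mu mu' r T') == r).
  move=> T' hT'; have vp := vpsi T' hT'.
  move: (hT') => /is_sytP [g1 g2 g3 g4 g5].
  have hsm : sumn mu' <= S by rewrite hsum.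
  have hskS : forall x, in_skewc mu x -> x != x0 -> in_skewc mu' x.
    by move=> x; rewrite hrel2 => /orP [//|->].
  have hT'pos : forall x, x != x0 -> in_skewc mu x -> 1 < val (psi mu mu' r T' x).
    move=> x hne hx; rewrite vp (negbTE hne) (hskS x hx hne).
    by have := g2 x (hskS x hx hne); glia.
  apply/andP; split.
    apply/is_sytP; split.
    - move=> x hx; rewrite vp.
      have hne : x != x0 by apply/negP => /eqP e; move: hx; rewrite e hx0.
      rewrite (negbTE hne); move: hx; rewrite hrel2 negb_or => /andP [/negbTE -> _].
      by [].
    - move=> x hx; rewrite vp; case: (boolP (x == x0)) => [_|hne].
        by move: hsm hN; glia.
      rewrite (hskS x hx hne); have := g2 x (hskS x hx hne); move: hsm; glia.
    - move=> v hv; case: (boolP (val v == 1)) => [/eqP v1 | vn1].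
        apply/eqP/cards1P; exists x0; apply/setP => x; rewrite !inE.
        case: (boolP (x == x0)) => [/eqP -> | hne].
          rewrite hx0 /=; apply/eqP/val_inj; rewrite vp eqxx /=.
          by move: v1; rewrite /=.
        apply/negbTE/negP => /andP [hx /eqP e].
        have := hT'pos x hne hx; rewrite e; move: v1; glia.
      have hvS : (nat_of_ord v).-1 < S.+1 by have := ltn_ord v; glia.
      have hv' : 0 < val (inord (val v).-1 : 'I_S.+1) <= S - sumn mu'.
        rewrite /= inordK //; move: hv vn1; rewrite hsum; glia.
      rewrite -(g3 _ hv'); apply: eq_card => x; rewrite !inE.
      case: (boolP (x == x0)) => [/eqP -> | hne].
        rewrite hx0 hx0' /=; apply/negbTE/negP => /eqP e.
        by move: vn1; rewrite -e vp eqxx.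
      rewrite hrel2 (negbTE hne) orbF.
      case: (boolP (in_skewc mu' x)) => //= hx.
      rewrite -!val_eqE vp (negbTE hne) hx /= inordK //.
      by apply/eqP/eqP; move: hv; glia.
    - move=> x y hx hy e l; rewrite !vp.
      case: (boolP (y == x0)) => [/eqP ey | hney].
        exfalso; move: hx l e; rewrite /in_skewc /in_skew ey /= => /andP [a _].
        by move=> l e; move: a; rewrite e; glia.
      rewrite (hskS y hy hney).
      case: (boolP (x == x0)) => [_|hnex]; first by have := g2 y (hskS y hy hney); glia.
      rewrite (hskS x hx hnex).
      by have := g4 x y (hskS x hx hnex) (hskS y hy hney) e l; glia.
    - move=> x y hx hy e l; rewrite !vp.
      case: (boolP (y == x0)) => [/eqP ey | hney].
        exfalso; move: hx l e; rewrite /in_skewc /in_skew ey /= => /andP [a _] l e.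
        move: a; rewrite e.
        have hr0' : r != 0 by move: l; glia.
        move: hr0; rewrite (negbTE hr0') /= => hlt2.
        have := hmono x.1 r.-1; rewrite -ltnS prednK ?lt0n // => /(_ l) hm2.
        by move: hlt2 hm2; glia.
      rewrite (hskS y hy hney).
      case: (boolP (x == x0)) => [_|hnex]; first by have := g2 y (hskS y hy hney); glia.
      rewrite (hskS x hx hnex).
      by have := g5 x y (hskS x hx hnex) (hskS y hy hney) e l; glia.
  rewrite /row1; case: pickP => [x /andP [hx h1] | hn].
    case: (boolP (x == x0)) => [/eqP -> //| hne].
    by have := hT'pos x hne hx; move: h1; glia.
  by have := hn x0; rewrite /= hx0 vp eqxx.
rewrite /num_syt.
apply: (bij_card (P := fun T : FT lam => is_syt mu T && (row1 mu T == r))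
                 (Q := fun T : FT lam => is_syt mu' T)
                 (f := @phi lam) (g := psi mu mu' r)) => //.
- move=> T hP; have hT' := ha T hP; move/andP: hP => [hT /eqP hr].
  have [_ _ fw2] := fwd T hT hr.
  move: (hT) => /is_sytP [h1 h2 _ _ _].
  apply/ffunP => x; apply: val_inj; rewrite (vpsi _ hT' x) vphi.
  case: (boolP (x == x0)) => [/eqP -> | hne].
    by rewrite fw2 //= !eqxx.
  case: (boolP (in_skewc mu' x)) => hx.
    by have := h2 x (hskew' x hx); glia.
  by rewrite h1 // hrel2 (negbTE hne) orbF.
- move=> T' hT'; move: (hT') => /is_sytP [g1 _ _ _ _].
  apply/ffunP => x; apply: val_inj; rewrite vphi (vpsi _ hT' x).
  case: (boolP (x == x0)) => [/eqP -> | hne].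
    by rewrite g1 // hx0'.
  by case: (boolP (in_skewc mu' x)) => hx //=; rewrite g1.
Qed.

Lemma nth_lam3 a b c i : b <= a -> c <= b ->
  nth 0 (lam3 a b c) i = nth 0 [:: a; b; c] i.
Proof.
move=> hba hcb; rewrite /lam3 /=.
case: (posnP c) => [c0|cp]; last first.
  by rewrite (leq_trans cp hcb) (leq_trans cp (leq_trans hcb hba)).
case: (posnP b) => [b0|bp].
  rewrite b0 c0; case: (posnP a) => [a0|ap]; rewrite ?a0 /=;
  by case: i => [|[|[|i]]] => //=; rewrite ?nth_nil.
rewrite (leq_trans bp hba) c0 /=.
by case: i => [|[|[|i]]] => //=; rewrite ?nth_nil.
Qed.

Lemma sumn_lam3 a b c : sumn (lam3 a b c) = a + b + c.
Proof.
rewrite /lam3 /=.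
by case: (posnP a) => [->|_]; case: (posnP b) => [->|_]; case: (posnP c) => [->|_];
  rewrite /=; lia.
Qed.

Lemma size_lam3 a b c : size (lam3 a b c) <= 3.
Proof. by rewrite /lam3 /=; case: (0 < a); case: (0 < b); case: (0 < c). Qed.

Lemma num_syt_rec a b c m1 m2 m3 : b <= a -> c <= b -> m2 <= m1 -> m3 <= m2 ->
  m1 + m2 + m3 < a + b + c ->
  num_syt (lam3 a b c) [:: m1; m2; m3] =
    (if m1 < a then num_syt (lam3 a b c) [:: m1.+1; m2; m3] else 0) +
    (if (m2 < b) && (m2 < m1) then num_syt (lam3 a b c) [:: m1; m2.+1; m3] else 0) +
    (if (m3 < c) && (m3 < m2) then num_syt (lam3 a b c) [:: m1; m2; m3.+1] else 0).
Proof.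
move=> hba hcb h21 h32 hlt.
have hN : sumn [:: m1; m2; m3] < sumn (lam3 a b c) by rewrite sumn_lam3 /= addn0 addnA.
have hl : forall i, nth 0 (lam3 a b c) i.+1 <= nth 0 (lam3 a b c) i.
  by move=> i; rewrite !nth_lam3 //; case: i => [|[|[|i]]].
have hm : forall i, nth 0 [:: m1; m2; m3] i.+1 <= nth 0 [:: m1; m2; m3] i.
  by move=> i; case: i => [|[|[|i]]].
rewrite {1}/num_syt (card_split_fun (f := row1 [:: m1; m2; m3]) (K := 3)); last first.
  move=> T hT; have [x [_ _ <-]] := row1P hT hN.
  exact: leq_trans (ltn_ord x.1) (size_lam3 a b c).
rewrite !big_ord_recr big_ord0 /=.
rewrite (@card_row _ _ [:: m1.+1; m2; m3] 0) //; try (by case=> [|[|[|i]]]; rewrite /= ?addn0 ?addn1 ?nth_nil); try (by rewrite /=; lia).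
rewrite (@card_row _ _ [:: m1; m2.+1; m3] 1) //; try (by case=> [|[|[|i]]]; rewrite /= ?addn0 ?addn1 ?nth_nil); try (by rewrite /=; lia).
rewrite (@card_row _ _ [:: m1; m2; m3.+1] 2) //; try (by case=> [|[|[|i]]]; rewrite /= ?addn0 ?addn1 ?nth_nil); try (by rewrite /=; lia).
rewrite !nth_lam3 //= andbT; lia.
Qed.

Definition Scn (n m1 m2 m3 : nat) : nat :=
  \sum_(a < n.+1) \sum_(b < n.+1) \sum_(c < n.+1)
    (if [&& b <= a, c <= b, a + b + c == n, m1 <= a, m2 <= b & m3 <= c]
     then num_syt (lam3 a b c) [:: m1; m2; m3] else 0).

Lemma sum_if_zero n (p : bool) (F : 'I_n -> nat) :
  \sum_(i < n) (if p then F i else 0) = if p then \sum_(i < n) F i else 0.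
Proof. by case: p => //; rewrite big1. Qed.

Lemma Sc_rec n N m1 m2 m3 : m2 <= m1 -> m3 <= m2 -> n = m1 + m2 + m3 + N.+1 ->
  Scn n m1 m2 m3 = Scn n m1.+1 m2 m3 + (if m2 < m1 then Scn n m1 m2.+1 m3 else 0)
                   + (if m3 < m2 then Scn n m1 m2 m3.+1 else 0).
Proof.
move=> h21 h32 hn.
rewrite /Scn -!sum_if_zero -!big_split; apply: eq_bigr => a _.
rewrite -!sum_if_zero -!big_split; apply: eq_bigr => b _.
rewrite -!sum_if_zero -!big_split; apply: eq_bigr => c _ /=.
set C0 := [&& b <= a, c <= b, a + b + c == n, m1 <= a, m2 <= b & m3 <= c].
have e1 : [&& b <= a, c <= b, a + b + c == n, m1.+1 <= a, m2 <= b & m3 <= c] = C0 && (m1 < a).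
  rewrite /C0; case: (ltnP m1 a) => h; rewrite ?(ltnW h) ?andbT ?andbF //.
have e2 : [&& b <= a, c <= b, a + b + c == n, m1 <= a, m2.+1 <= b & m3 <= c] = C0 && (m2 < b).
  rewrite /C0; case: (ltnP m2 b) => h; rewrite ?(ltnW h) ?andbT ?andbF //.
have e3 : [&& b <= a, c <= b, a + b + c == n, m1 <= a, m2 <= b & m3.+1 <= c] = C0 && (m3 < c).
  rewrite /C0; case: (ltnP m3 c) => h; rewrite ?(ltnW h) ?andbT ?andbF //.
rewrite e1 e2 e3.
case: (boolP C0) => hC; last by rewrite /=; case: (m2 < m1); case: (m3 < m2).
move: (hC); rewrite /C0 => /andP [hba /andP [hcb /andP [/eqP hs _]]].
rewrite num_syt_rec //; last by rewrite hs hn; lia.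
by case: (m1 < a); case: (m2 < b); case: (m2 < m1); case: (m3 < c); case: (m3 < m2).
Qed.

Lemma sum_eq_if n i (x : nat) : i < n ->
  \sum_(j < n) (if nat_of_ord j == i then x else 0) = x.
Proof. by move=> hi; rewrite -big_mkcond (big_ord1_eq _ (fun _ => x)) hi. Qed.

Lemma Sc0 m1 m2 m3 : m2 <= m1 -> m3 <= m2 -> Scn (m1 + m2 + m3) m1 m2 m3 = 1.
Proof.
move=> h21 h32; rewrite /Scn.
set n := m1 + m2 + m3.
have E : forall a b c : nat,
   (if [&& b <= a, c <= b, a + b + c == n, m1 <= a, m2 <= b & m3 <= c]
    then num_syt (lam3 a b c) [:: m1; m2; m3] else 0) =
   (if a == m1 then (if b == m2 then (if c == m3 then 1 else 0) else 0) else 0).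
  move=> a b c.
  case: (boolP [&& a == m1, b == m2 & c == m3]) => [/and3P [/eqP -> /eqP -> /eqP ->] | hne].
    rewrite !eqxx !leqnn h21 h32 /=.
    apply: num_syt_base; first by move=> i; rewrite nth_lam3.
    by rewrite sumn_lam3 /= addn0 addnA.
  rewrite ifF; last first.
    apply/negP => /andP [h1 /andP [h2 /andP [/eqP h3 /and3P [h4 h5 h6]]]]; move: hne.
    have -> : a = m1 by rewrite /n in h3; lia.
    have -> : b = m2 by rewrite /n in h3; lia.
    have -> : c = m3 by rewrite /n in h3; lia.
    by rewrite !eqxx.
  by move: hne; case: (a == m1); case: (b == m2); case: (c == m3).
transitivity (\sum_(a < n.+1) (if nat_of_ord a == m1 then \sum_(b < n.+1)
   (if nat_of_ord b == m2 then \sum_(c < n.+1)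
      (if nat_of_ord c == m3 then 1 else 0) else 0) else 0)).
  apply: eq_bigr => a _; rewrite -sum_if_zero; apply: eq_bigr => b _.
  rewrite -sum_if_zero -sum_if_zero; apply: eq_bigr => c _; exact: E.
rewrite sum_eq_if; last by rewrite ltnS /n; lia.
rewrite sum_eq_if; last by rewrite ltnS /n; lia.
by rewrite sum_eq_if // ltnS /n; lia.
Qed.

Lemma rjk_0k k : rjk 0 k = 0%R.
Proof. by rewrite /rjk /= rpoly0 !mul0r subrr. Qed.

Lemma rjk_j0 j : rjk j 0 = 0%R.
Proof. by rewrite /rjk /= rpoly0 !mulr0 subrr. Qed.

Lemma Sc_Lm N : forall n m1 m2 m3, m2 <= m1 -> m3 <= m2 -> n = m1 + m2 + m3 + N ->
  ((Scn n m1 m2 m3)%:Z = Lm N (rjk (m2 - m3).+1 (m1 - m2).+1))%R.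
Proof.
elim: N => [|N IH] n m1 m2 m3 h21 h32 hn.
  by rewrite hn addn0 Sc0 // Lm0_rjk.
rewrite (@Sc_rec n N m1 m2 m3 h21 h32 hn) !PoszD.
rewrite -LmX rjk_rec // LmD LmD.
congr (_ + _ + _)%R.
- rewrite (IH n m1.+1 m2 m3) ?(leqW h21) //; last by rewrite hn; lia.
  have e : m1.+1 - m2 = (m1 - m2).+1 by lia.
  by rewrite e.
- case: (ltnP m2 m1) => h.
    rewrite (IH n m1 m2.+1 m3 h (leqW h32)); last by rewrite hn; lia.
    have e1 : (m1 - m2.+1).+1 = m1 - m2 by lia.
    have e2 : m2.+1 - m3 = (m2 - m3).+1 by lia.
    by rewrite e1 e2.
  have -> : m1 - m2 = 0 by lia.
  by rewrite /= rjk_j0 Lm0.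
- case: (ltnP m3 m2) => h.
    rewrite (IH n m1 m2 m3.+1 h21 h); last by rewrite hn; lia.
    have e1 : (m2 - m3.+1).+1 = m2 - m3 by lia.
    by rewrite e1.
  have -> : m2 - m3 = 0 by lia.
  by rewrite /= rjk_0k Lm0.
Qed.

Lemma contained2 mu1 mu2 a b c : 0 < mu2 -> b <= a -> c <= b ->
  contained [:: mu1; mu2] (lam3 a b c) = (mu1 <= a) && (mu2 <= b).
Proof.
move=> h0 hba hcb; rewrite /contained /= !nth_lam3 //= andbT.
case: (posnP b) => [b0|bp].
  rewrite b0 in hcb *; have -> : c = 0 by lia.
  rewrite leqn0 (negbTE (lt0n_neq0 h0)) andbF /lam3 /=.
  by case: (0 < a).
rewrite /lam3 /= bp (leq_trans bp hba) /=.
by case: (0 < c).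
Qed.

Unset Implicit Arguments.

Theorem theorem2p2 (mu1 mu2 n : nat) :
  0 < mu2 -> mu2 <= mu1 -> mu1 + mu2 <= n ->
  let j := mu2.+1 in
  let k := (mu1 - mu2).+1 in
  ((\sum_(a < n.+1) \sum_(b < n.+1) \sum_(c < n.+1)
      (if [&& b <= a, c <= b, a + b + c == n &
              contained [:: mu1; mu2] (lam3 a b c)]
       then num_syt (lam3 a b c) [:: mu1; mu2] else 0))%N%:Z
   = \sum_(i < size (rjk j k))
       (rjk j k)`_i * (motzkin (i + (n - (mu1 + mu2))))%:Z)%R.
Proof.
move=> h0 h21 hn j k.
set N := n - (mu1 + mu2).
have hnN : n = mu1 + mu2 + 0 + N by rewrite /N addn0 subnKC.
have -> : (\sum_(a < n.+1) \sum_(b < n.+1) \sum_(c < n.+1)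
      (if [&& b <= a, c <= b, a + b + c == n &
              contained [:: mu1; mu2] (lam3 a b c)]
       then num_syt (lam3 a b c) [:: mu1; mu2] else 0))%N = Scn n mu1 mu2 0.
  rewrite /Scn; apply: eq_bigr => a _; apply: eq_bigr => b _; apply: eq_bigr => c _.
  case: (boolP ((b <= a) && (c <= b))) => [/andP [hba hcb] | hn'].
    rewrite hba hcb /= contained2 // leq0n andbT.
    rewrite (@num_syt_ext _ [:: mu1; mu2] [:: mu1; mu2; 0]) //.
    by case=> [|[|[|i]]] //=; rewrite !nth_nil.
  by move: hn'; case: (b <= a); case: (c <= b).
rewrite (Sc_Lm (N := N) h21 (leq0n _) hnN) subn0.
by rewrite /Lm /j /k.
Qed.
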